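(* Consider the Popowicz system for real functions $u(x,t)$, $v(x,t)$: $$m_t + m_x(2u+v) + 3m(2u_x+v_x)=0,\qquad n_t+n_x(2u+v)+2n(2u_x+v_x)=0,\qquad m=u-u_{xx},\quad n=v-v_{xx}.$$ Let $N\ge 1$. The system admits $N$-peakon solutions of the form $$u(x,t)=\sum_{j=1}^N a_j(t)\,e^{-|x-q_j(t)|},\qquad v(x,t)=\sum_{j=1}^N b_j(t)\,e^{-|x-q_j(t)|}$$ (so that $m=2\sum_j a_j\delta(x-q_j)$, $n=2\sum_j b_j\delta(x-q_j)$), where the amplitudes $a_j,b_j$ and positions $q_j$ satisfy $$\dot a_j = 2a_j\sum_{k=1}^N(2a_k+b_k)\,\mathrm{sgn}(q_j-q_k)\,e^{-|q_j-q_k|},\qquad \dot b_j = b_j\sum_{k=1}^N(2a_k+b_k)\,\mathrm{sgn}(q_j-q_k)\,e^{-|q_j-q_k|},$$ $$\dot q_j=\sum_{k=1}^N(2a_k+b_k)\,e^{-|q_j-q_k|},\qquad j=1,\dots,N.$$ These equations form a Hamiltonian system $\dot a_j=\{a_j,h\}$, $\dot b_j=\{b_j,h\}$, $\dot q_j=\{q_j,h\}$ with Hamiltonian $h=2\sum_{j=1}^N(a_j+b_j)$ and the Poisson bracket on the $3N$-dimensional phase space with coordinates $(a_j,b_j,q_j)$ defined by $$\{a_j,a_k\}=2a_ja_k\,\mathrm{sgn}(q_j-q_k)e^{-|q_j-q_k|},\quad \{b_j,b_k\}=\tfrac12 b_jb_k\,\mathrm{sgn}(q_j-q_k)e^{-|q_j-q_k|},$$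 $$\{q_j,q_k\}=\tfrac12\mathrm{sgn}(q_j-q_k)\big(1-e^{-|q_j-q_k|}\big),\quad \{q_j,a_k\}=a_ke^{-|q_j-q_k|},\quad \{q_j,b_k\}=\tfrac12 b_ke^{-|q_j-q_k|},$$ $$\{a_j,b_k\}=a_jb_k\,\mathrm{sgn}(q_j-q_k)e^{-|q_j-q_k|},$$ for all $j,k=1,\dots,N$ (the remaining brackets being determined by antisymmetry). This Poisson bracket has the $N$ Casimirs $\mathcal C_j=a_j/b_j^2$, $j=1,\dots,N$.
   Context: The peakon functions are not smooth, so they are solutions of the system in a weak (distributional) sense, with $m,n$ measure-valued (sums of Dirac deltas). The convention $\mathrm{sgn}(0)=0$ is used, so terms with $k=j$ in the sums involving $\mathrm{sgn}(q_j-q_k)$ vanish. The Poisson bracket is extended to functions on phase space by bilinearity, antisymmetry and the Leibniz rule; a Casimir is a function $\mathcal C$ with $\{\mathcal C,F\}=0$ for every function $F$ on phase space. *)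

(* Defs.v *)
From Stdlib Require Import Reals List.
From Coquelicot Require Import Coquelicot.
Import ListNotations.
Open Scope R_scope.

Definition sgn (x : R) : R :=
  if Rlt_dec 0 x then 1 else if Rlt_dec x 0 then -1 else 0.

(** finite sum  sumN N f = f 0 + ... + f (N-1)  (indices j = 1..N of the
    paper are shifted to 0..N-1) *)
Fixpoint sumN (N : nat) (f : nat -> R) : R :=
  match N with O => 0 | S n => sumN n f + f n end.

Inductive coord : Type := CA (j : nat) | CB (j : nat) | CQ (j : nat).

Definition coord_eq_dec (c d : coord) : {c = d} + {c <> d}.
Proof. decide equality; apply PeanoNat.Nat.eq_dec. Defined.

(** a point of phase space; only the coordinates with index < N matter *)
Definition phase := coord -> R.

Definition coords (N : nat) : list coord :=
  flat_map (fun j => [CA j; CB j; CQ j]) (seq 0 N).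

Definition sumL (l : list coord) (f : coord -> R) : R :=
  fold_right (fun c acc => f c + acc) 0 l.

Definition upd (z : phase) (c : coord) (s : R) : phase :=
  fun d => if coord_eq_dec c d then s else z d.

Definition pd (F : phase -> R) (c : coord) (z : phase) : R :=
  Derive (fun s => F (upd z c s)) (z c).

Definition has_pd (F : phase -> R) (c : coord) (z : phase) : Prop :=
  ex_derive (fun s => F (upd z c s)) (z c).

Definition Eq (z : phase) (j k : nat) : R := exp (- Rabs (z (CQ j) - z (CQ k))).
Definition Sq (z : phase) (j k : nat) : R := sgn (z (CQ j) - z (CQ k)).

(** structure matrix { c , d }(z) of the Poisson bracket on coordinates;
    the brackets not listed in the paper are obtained by antisymmetry *)
Definition PB (z : phase) (c d : coord) : R :=
  match c, d with
  | CA j, CA k => 2 * z (CA j) * z (CA k) * Sq z j k * Eq z j k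
  | CB j, CB k => / 2 * z (CB j) * z (CB k) * Sq z j k * Eq z j k
  | CQ j, CQ k => / 2 * Sq z j k * (1 - Eq z j k)
  | CQ j, CA k => z (CA k) * Eq z j k
  | CA j, CQ k => - (z (CA j) * Eq z k j)
  | CQ j, CB k => / 2 * z (CB k) * Eq z j k
  | CB j, CQ k => - (/ 2 * z (CB j) * Eq z k j)
  | CA j, CB k => z (CA j) * z (CB k) * Sq z j k * Eq z j k
  | CB j, CA k => - (z (CA k) * z (CB j) * Sq z k j * Eq z k j)
  end.

(** extension of the bracket to functions on phase space by bilinearity,
    antisymmetry and the Leibniz rule:
    {F,G}(z) = sum_{c,d} dF/dc (z) {c,d}(z) dG/dd (z) *)
Definition pbr (N : nat) (F G : phase -> R) (z : phase) : R :=
  sumL (coords N) (fun c => sumL (coords N) (fun d =>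
    pd F c z * PB z c d * pd G d z)).

Definition cf (c : coord) : phase -> R := fun z => z c.

Definition ham (N : nat) (z : phase) : R :=
  2 * sumN N (fun j => z (CA j) + z (CB j)).

Definition casimir (j : nat) (z : phase) : R := z (CA j) / (z (CB j) ^ 2).

Definition rhs_a (N : nat) (z : phase) (j : nat) : R :=
  2 * z (CA j) * sumN N (fun k => (2 * z (CA k) + z (CB k)) * Sq z j k * Eq z j k).
Definition rhs_b (N : nat) (z : phase) (j : nat) : R :=
  z (CB j) * sumN N (fun k => (2 * z (CA k) + z (CB k)) * Sq z j k * Eq z j k).
Definition rhs_q (N : nat) (z : phase) (j : nat) : R :=
  sumN N (fun k => (2 * z (CA k) + z (CB k)) * Eq z j k).

Definition pt (a b q : nat -> R -> R) (t : R) : phase :=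
  fun c => match c with CA j => a j t | CB j => b j t | CQ j => q j t end.

Definition peak (N : nat) (c q : nat -> R -> R) (t x : R) : R :=
  sumN N (fun j => c j t * exp (- Rabs (x - q j t))).

(** its x-derivative, with the convention sgn 0 = 0 at the peaks
    (i.e. the average of the one-sided derivatives there) *)
Definition peak_x (N : nat) (c q : nat -> R -> R) (t x : R) : R :=
  sumN N (fun j => c j t * (- sgn (x - q j t)) * exp (- Rabs (x - q j t))).

(** action of the measure 2 sum_j c_j(t) delta(x - q_j(t)) on a function g *)
Definition dpair (N : nat) (c q : nat -> R -> R) (t : R) (g : R -> R) : R :=
  sumN N (fun j => 2 * c j t * g (q j t)).

Definition test_fun (M : R) (phi : R -> R) : Prop :=
  (forall k x, ex_derive_n phi k x) /\ (forall x, M < Rabs x -> phi x = 0).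

(* Main.v *)
Require Import Defs.
From Stdlib Require Import Reals List Lra Lia FunctionalExtensionality.
From Coquelicot Require Import Coquelicot.
Import ListNotations.
Open Scope R_scope.


Lemma dconv (f : R -> R) (x l l' : R) : is_derive f x l -> l = l' -> is_derive f x l'.
Proof. intros H ->; exact H. Qed.
Lemma d_mult (f g : R -> R) x df dg : is_derive f x df -> is_derive g x dg ->
  is_derive (fun s => f s * g s) x (df * g x + f x * dg).
Proof. intros. apply (is_derive_mult f g); auto. intros; apply Rmult_comm. Qed.
Lemma d_plus (f g : R -> R) x df dg : is_derive f x df -> is_derive g x dg ->
  is_derive (fun s => f s + g s) x (df + dg).
Proof. intros. apply (is_derive_plus f g); auto. Qed.
Lemma d_minus (f g : R -> R) x df dg : is_derive f x df -> is_derive g x dg ->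
  is_derive (fun s => f s - g s) x (df - dg).
Proof. intros. apply (is_derive_minus f g); auto. Qed.
Lemma d_opp (f : R -> R) x df : is_derive f x df ->
  is_derive (fun s => - f s) x (- df).
Proof. intros. apply (is_derive_opp f); auto. Qed.
Lemma d_const (a x : R) : is_derive (fun _ => a) x 0.
Proof. apply (is_derive_const a x). Qed.
Lemma d_id (x : R) : is_derive (fun s => s) x 1.
Proof. apply (is_derive_id x). Qed.
Lemma d_exp (f : R -> R) x df : is_derive f x df ->
  is_derive (fun s => exp (f s)) x (df * exp (f x)).
Proof. intros H. apply (is_derive_comp exp f x (exp (f x)) df); auto. apply is_derive_exp. Qed.
Lemma sgn_sign x : sgn x = sign x.
Proof. unfold sgn. destruct (Rlt_dec 0 x). rewrite sign_eq_1; auto.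
 destruct (Rlt_dec x 0). rewrite sign_eq_m1; auto. replace x with 0 by lra. now rewrite sign_0. Qed.
Lemma d_Rabs (f : R -> R) x df : is_derive f x df -> f x <> 0 ->
  is_derive (fun s => Rabs (f s)) x (sgn (f x) * df).
Proof. intros. rewrite sgn_sign. apply (is_derive_Rabs f); auto. Qed.

Lemma sgn_opp x : sgn (- x) = - sgn x.
Proof. unfold sgn. destruct (Rlt_dec 0 x); destruct (Rlt_dec 0 (-x)); destruct (Rlt_dec (-x) 0);
 destruct (Rlt_dec x 0); lra. Qed.
Lemma sgn_pos x : 0 < x -> sgn x = 1.
Proof. unfold sgn; intros; destruct (Rlt_dec 0 x); lra. Qed.
Lemma sgn_neg x : x < 0 -> sgn x = -1.
Proof. unfold sgn; intros; destruct (Rlt_dec 0 x); destruct (Rlt_dec x 0); lra. Qed.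
Lemma sgn_0 : sgn 0 = 0.
Proof. unfold sgn; destruct (Rlt_dec 0 0); destruct (Rlt_dec 0 0); lra. Qed.
Lemma Sq_anti z j k : Sq z k j = - Sq z j k.
Proof. unfold Sq. rewrite <- sgn_opp. f_equal; ring. Qed.
Lemma Eq_sym z j k : Eq z k j = Eq z j k.
Proof. unfold Eq. rewrite Rabs_minus_sym. auto. Qed.

Lemma sumN_ext n f g : (forall j, (j < n)%nat -> f j = g j) -> sumN n f = sumN n g.
Proof. induction n; simpl; intros; auto. rewrite IHn; [|intros; apply H; lia]. rewrite H; auto. Qed.
Lemma sumN_plus n f g : sumN n (fun j => f j + g j) = sumN n f + sumN n g.
Proof. induction n; simpl; [ring|rewrite IHn; ring]. Qed.
Lemma sumN_scal n c f : sumN n (fun j => c * f j) = c * sumN n f.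
Proof. induction n; simpl; [ring|rewrite IHn; ring]. Qed.
Lemma sumN_opp n f : sumN n (fun j => - f j) = - sumN n f.
Proof. induction n; simpl; [ring|rewrite IHn; ring]. Qed.
Lemma sumN_delta n m (c : R) : (m < n)%nat -> sumN n (fun j => if PeanoNat.Nat.eq_dec j m then c else 0) = c.
Proof. induction n; simpl; intros. lia. destruct (PeanoNat.Nat.eq_dec n m).
 subst. rewrite sumN_ext with (g := fun _ => 0).
 assert (forall k, sumN k (fun _ => 0) = 0) as Z by (induction k; simpl; [auto|rewrite IHk; ring]). rewrite Z; ring.
 intros; destruct (PeanoNat.Nat.eq_dec j m); [lia|auto].
 rewrite IHn; [ring|lia]. Qed.
Lemma d_sumN n (f : nat -> R -> R) g x : (forall j, (j < n)%nat -> is_derive (f j) x (g j)) ->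
  is_derive (fun s => sumN n (fun j => f j s)) x (sumN n g).
Proof. induction n; simpl; intros. apply d_const. apply d_plus; auto. Qed.

Lemma sumL_app l1 l2 f : sumL (l1 ++ l2) f = sumL l1 f + sumL l2 f.
Proof. induction l1; simpl; [ring| rewrite IHl1; ring]. Qed.
Lemma sumL_ext l f g : (forall c, In c l -> f c = g c) -> sumL l f = sumL l g.
Proof. induction l; simpl; intros; auto. rewrite H, IHl; auto. Qed.
Lemma sumL_plus l f g : sumL l (fun c => f c + g c) = sumL l f + sumL l g.
Proof. induction l; simpl; [ring| rewrite IHl; ring]. Qed.
Lemma sumL_scal l a f : sumL l (fun c => a * f c) = a * sumL l f.
Proof. induction l; simpl; [ring| rewrite IHl; ring]. Qed.
Lemma sumL_zero l f : (forall c, In c l -> f c = 0) -> sumL l f = 0.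
Proof. intros H. rewrite (sumL_ext l f (fun _ => 0)); auto. clear H; induction l; simpl; auto. rewrite IHl; ring. Qed.

Definition dl (f c : coord) : R := if coord_eq_dec f c then 1 else 0.

Lemma sumL_delta l c X : NoDup l -> In c l -> sumL l (fun f => dl f c * X f) = X c.
Proof. induction l; simpl; intros Hn Hi. destruct Hi. inversion Hn; subst.
 destruct Hi as [<- | Hi].
 - rewrite sumL_zero. unfold dl. destruct coord_eq_dec; [ring|congruence].
   intros. unfold dl; destruct coord_eq_dec; [subst; contradiction| ring].
 - rewrite IHl; auto. unfold dl; destruct coord_eq_dec; [subst; contradiction| ring]. Qed.

Lemma coords_S n : coords (S n) = coords n ++ [CA n; CB n; CQ n].
Proof. unfold coords. rewrite seq_S, flat_map_app. simpl. auto. Qed.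
Lemma sumL_coords n F : sumL (coords n) F = sumN n (fun m => F (CA m) + F (CB m) + F (CQ m)).
Proof. induction n. auto. rewrite coords_S, sumL_app, IHn. simpl. ring. Qed.
Lemma in_coords n c : In c (coords n) <-> match c with CA j | CB j | CQ j => (j < n)%nat end.
Proof. unfold coords. rewrite in_flat_map. split.
 - intros [j [Hj Hc]]. apply in_seq in Hj. simpl in Hc. destruct Hc as [<-|[<-|[<-|[]]]]; lia.
 - destruct c as [j|j|j]; intros; exists j; split; try (apply in_seq; lia); simpl; auto. Qed.
Lemma nodup_coords n : NoDup (coords n).
Proof. induction n. constructor. rewrite coords_S. apply NoDup_app; auto.
 - repeat constructor; simpl; intuition congruence.
 - intros x Hx Hy. apply in_coords in Hx. simpl in Hy. destruct Hy as [<-|[<-|[<-|[]]]]; lia. Qed.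


Lemma upd_same z f : upd z f (z f) = z.
Proof. apply FunctionalExtensionality.functional_extensionality. intros d; unfold upd; destruct coord_eq_dec; subst; auto. Qed.
Lemma upd_deriv z f c : is_derive (fun s => upd z f s c) (z f) (dl f c).
Proof. unfold upd, dl. destruct coord_eq_dec. apply d_id. apply d_const. Qed.
Lemma pd_cf z c f : pd (cf c) f z = dl f c.
Proof. unfold pd, cf. apply is_derive_unique. apply upd_deriv. Qed.

Lemma pbr_cf_l N c G z : In c (coords N) ->
  pbr N (cf c) G z = sumL (coords N) (fun f => PB z c f * pd G f z).
Proof. intros H. unfold pbr.
 rewrite (sumL_ext _ _ (fun c' => dl c' c * sumL (coords N) (fun f => PB z c' f * pd G f z))).
 apply sumL_delta; auto. apply nodup_coords.
 intros c' _. rewrite pd_cf, <- sumL_scal. apply sumL_ext; intros; ring. Qed.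

Lemma pbr_cf_cf N d e w : In d (coords N) -> In e (coords N) -> pbr N (cf d) (cf e) w = PB w d e.
Proof. intros Hd He. rewrite pbr_cf_l; auto.
 rewrite (sumL_ext _ _ (fun f => dl f e * PB w d f)). apply sumL_delta; auto. apply nodup_coords.
 intros. rewrite pd_cf; ring. Qed.

Lemma dlA m j : dl (CA m) (CA j) = if PeanoNat.Nat.eq_dec j m then 1 else 0.
Proof. unfold dl; destruct coord_eq_dec; destruct PeanoNat.Nat.eq_dec; congruence. Qed.
Lemma dlB m j : dl (CB m) (CB j) = if PeanoNat.Nat.eq_dec j m then 1 else 0.
Proof. unfold dl; destruct coord_eq_dec; destruct PeanoNat.Nat.eq_dec; congruence. Qed.

Lemma pd_ham N z f : pd (ham N) f z =
  2 * sumN N (fun j => dl f (CA j) + dl f (CB j)).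
Proof. unfold pd, ham. apply is_derive_unique.
 apply (is_derive_scal (fun s => sumN N (fun j => upd z f s (CA j) + upd z f s (CB j)))).
 apply (d_sumN N (fun j s => upd z f s (CA j) + upd z f s (CB j))). intros; apply d_plus; apply upd_deriv. Qed.

Lemma pd_ham_A N z m : (m < N)%nat -> pd (ham N) (CA m) z = 2.
Proof. intros. rewrite pd_ham. rewrite (sumN_ext _ _ (fun j => if PeanoNat.Nat.eq_dec j m then 1 else 0)).
 rewrite sumN_delta; auto; ring. intros. rewrite dlA. unfold dl at 1. destruct coord_eq_dec; [congruence|ring]. Qed.
Lemma pd_ham_B N z m : (m < N)%nat -> pd (ham N) (CB m) z = 2.
Proof. intros. rewrite pd_ham. rewrite (sumN_ext _ _ (fun j => if PeanoNat.Nat.eq_dec j m then 1 else 0)).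
 rewrite sumN_delta; auto; ring. intros. rewrite dlB. unfold dl at 1. destruct coord_eq_dec; [congruence|ring]. Qed.
Lemma pd_ham_Q N z m : pd (ham N) (CQ m) z = 0.
Proof. intros. rewrite pd_ham. rewrite (sumN_ext _ _ (fun j => 0 * 0)).
 rewrite sumN_scal; ring. intros. unfold dl. do 2 (destruct coord_eq_dec; [congruence|]). ring. Qed.

Lemma part2 N : forall (z : phase) (j : nat), (j < N)%nat ->
     pbr N (cf (CA j)) (ham N) z = rhs_a N z j /\
     pbr N (cf (CB j)) (ham N) z = rhs_b N z j /\
     pbr N (cf (CQ j)) (ham N) z = rhs_q N z j.
Proof. intros z j Hj.
 assert (HA: In (CA j) (coords N)) by (apply in_coords; auto).
 assert (HB: In (CB j) (coords N)) by (apply in_coords; auto).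
 assert (HQ: In (CQ j) (coords N)) by (apply in_coords; auto).
 unfold rhs_a, rhs_b, rhs_q.
 repeat split; [rewrite pbr_cf_l; auto ..]; rewrite sumL_coords; rewrite <- ?sumN_scal;
  apply sumN_ext; intros m Hm; rewrite pd_ham_A, pd_ham_B, pd_ham_Q; auto; simpl;
  try rewrite (Sq_anti z j m); try rewrite (Eq_sym z j m). all: field. Qed.


Definition idx (c : coord) : nat := match c with CA j | CB j | CQ j => j end.

Definition Pf (c d : coord) (x1 x2 x3 x4 S E : R) : R :=
  match c, d with
  | CA _, CA _ => 2 * x1 * x3 * S * E
  | CB _, CB _ => / 2 * x2 * x4 * S * E
  | CQ _, CQ _ => / 2 * S * (1 - E)
  | CQ _, CA _ => x3 * E
  | CA _, CQ _ => - (x1 * E)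
  | CQ _, CB _ => / 2 * x4 * E
  | CB _, CQ _ => - (/ 2 * x2 * E)
  | CA _, CB _ => x1 * x4 * S * E
  | CB _, CA _ => x3 * x2 * S * E
  end.

Lemma PB_Pf z c d : PB z c d = Pf c d (z (CA (idx c))) (z (CB (idx c))) (z (CA (idx d))) (z (CB (idx d)))
   (Sq z (idx c) (idx d)) (Eq z (idx c) (idx d)).
Proof. destruct c as [j|j|j], d as [k|k|k]; simpl; try rewrite (Sq_anti z j k); try rewrite (Eq_sym z j k); ring. Qed.

Definition Pfd c d x1 x2 x3 x4 S E dx1 dx2 dx3 dx4 dS dE :=
  dx1 * (Pf c d 1 x2 x3 x4 S E - Pf c d 0 x2 x3 x4 S E)
+ dx2 * (Pf c d x1 1 x3 x4 S E - Pf c d x1 0 x3 x4 S E)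
+ dx3 * (Pf c d x1 x2 1 x4 S E - Pf c d x1 x2 0 x4 S E)
+ dx4 * (Pf c d x1 x2 x3 1 S E - Pf c d x1 x2 x3 0 S E)
+ dS * (Pf c d x1 x2 x3 x4 1 E - Pf c d x1 x2 x3 x4 0 E)
+ dE * (Pf c d x1 x2 x3 x4 S 1 - Pf c d x1 x2 x3 x4 S 0).

Ltac dstep := match goal with
 | |- is_derive (fun s => _ * _) _ _ => apply d_mult
 | |- is_derive (fun s => _ - _) _ _ => apply d_minus
 | |- is_derive (fun s => _ + _) _ _ => apply d_plus
 | |- is_derive (fun s => - _) _ _ => apply d_opp
 | |- is_derive (fun s => ?a) _ _ => apply d_const
 | |- _ => eassumption
 end.

Lemma Pf_deriv c d (x1 x2 x3 x4 S E : R -> R) t dx1 dx2 dx3 dx4 dS dE :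
  is_derive x1 t dx1 -> is_derive x2 t dx2 -> is_derive x3 t dx3 -> is_derive x4 t dx4 ->
  is_derive S t dS -> is_derive E t dE ->
  is_derive (fun s => Pf c d (x1 s) (x2 s) (x3 s) (x4 s) (S s) (E s)) t
    (Pfd c d (x1 t) (x2 t) (x3 t) (x4 t) (S t) (E t) dx1 dx2 dx3 dx4 dS dE).
Proof. intros H1 H2 H3 H4 H5 H6.
 destruct c, d; unfold Pfd; simpl; eapply dconv. all: try (repeat dstep). all: cbv beta; field. Qed.


Lemma upd_lin z f t c : upd z f t c = z c + dl f c * (t - z f).
Proof. unfold upd, dl. destruct coord_eq_dec; subst; ring. Qed.
Lemma upd_at z f c : upd z f (z f) c = z c.
Proof. unfold upd; destruct coord_eq_dec; subst; auto. Qed.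
Lemma dl_01 f c : dl f c = 0 \/ dl f c = 1.
Proof. unfold dl; destruct coord_eq_dec; auto. Qed.
Lemma sgn_stable D h : D <> 0 -> Rabs h < Rabs D -> sgn (D + h) = sgn D.
Proof. intros. apply Rabs_def2 in H0 as [H1 H2]. destruct (Rlt_dec 0 D).
 rewrite Rabs_pos_eq in H1, H2 by lra. rewrite (sgn_pos D), (sgn_pos (D+h)); lra.
 assert (D < 0) by lra. rewrite Rabs_left in H1, H2 by lra. rewrite (sgn_neg D), (sgn_neg (D+h)); lra. Qed.

Lemma qdiff z f s j k : upd z f s (CQ j) - upd z f s (CQ k) =
  (z (CQ j) - z (CQ k)) + (dl f (CQ j) - dl f (CQ k)) * (s - z f).
Proof. rewrite !upd_lin; ring. Qed.

Lemma locally_sgn z f j k : z (CQ j) <> z (CQ k) ->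
  locally (z f) (fun s => sgn (z (CQ j) - z (CQ k)) = sgn (upd z f s (CQ j) - upd z f s (CQ k))).
Proof. intros H. set (D := z (CQ j) - z (CQ k)). assert (HD: D <> 0) by (unfold D; lra).
 assert (Hp : 0 < Rabs D / 2) by (apply Rabs_pos_lt in HD; lra).
 exists (mkposreal _ Hp). intros y Hy. change (Rabs (y - z f) < Rabs D / 2) in Hy.
 rewrite qdiff. fold D. rewrite sgn_stable; auto.
 rewrite Rabs_mult. assert (Rabs (dl f (CQ j) - dl f (CQ k)) <= 1).
 { destruct (dl_01 f (CQ j)) as [-> | ->]; destruct (dl_01 f (CQ k)) as [-> | ->];
   unfold Rabs; destruct Rcase_abs; lra. }
 assert (0 <= Rabs (y - z f)) by apply Rabs_pos. nra. Qed.

Lemma dSq z f j k : (j = k \/ z (CQ j) <> z (CQ k)) ->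
  is_derive (fun s => Sq (upd z f s) j k) (z f) 0.
Proof. intros [<- | H]; unfold Sq.
 - eapply is_derive_ext. 2: apply (d_const 0). intros s; simpl. rewrite Rminus_diag, sgn_0; auto.
 - eapply is_derive_ext_loc. apply locally_sgn; auto. apply d_const. Qed.

Lemma dEq z f j k : (j = k \/ z (CQ j) <> z (CQ k)) ->
  is_derive (fun s => Eq (upd z f s) j k) (z f)
    (- Sq z j k * Eq z j k * (dl f (CQ j) - dl f (CQ k))).
Proof. intros [<- | H]; unfold Eq, Sq.
 - eapply dconv. eapply is_derive_ext. 2: apply (d_const (exp (- Rabs 0))). intros s; simpl. rewrite Rminus_diag; auto. ring.
 - eapply dconv. apply d_exp. apply d_opp. apply d_Rabs.
   eapply is_derive_ext. intros s; symmetry; apply qdiff.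
   apply d_plus. apply d_const. apply (is_derive_scal (fun s => s - z f)). eapply dconv. apply d_minus. apply d_id. apply d_const. reflexivity.
   cbv beta; rewrite !upd_at; lra. cbv beta. rewrite !upd_at. ring. Qed.

Definition DPB z d e f :=
  let j := idx d in let k := idx e in
  Pfd d e (z (CA j)) (z (CB j)) (z (CA k)) (z (CB k)) (Sq z j k) (Eq z j k)
    (dl f (CA j)) (dl f (CB j)) (dl f (CA k)) (dl f (CB k)) 0
    (- Sq z j k * Eq z j k * (dl f (CQ j) - dl f (CQ k))).

Lemma pd_PB z d e f : (idx d = idx e \/ z (CQ (idx d)) <> z (CQ (idx e))) ->
  pd (fun w => PB w d e) f z = DPB z d e f.
Proof. intros H. unfold pd. apply is_derive_unique.
 apply (is_derive_ext (fun s => Pf d e (upd z f s (CA (idx d))) (upd z f s (CB (idx d))) (upd z f s (CA (idx e))) (upd z f s (CB (idx e))) (Sq (upd z f s) (idx d) (idx e)) (Eq (upd z f s) (idx d) (idx e)))).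
 intros s; symmetry; apply PB_Pf.
 pose proof (upd_deriv z f (CA (idx d))) as H1.
 pose proof (upd_deriv z f (CB (idx d))) as H2.
 pose proof (upd_deriv z f (CA (idx e))) as H3.
 pose proof (upd_deriv z f (CB (idx e))) as H4.
 pose proof (dSq z f (idx d) (idx e) H) as H5.
 pose proof (dEq z f (idx d) (idx e) H) as H6.
 pose proof (Pf_deriv d e _ _ _ _ _ _ _ _ _ _ _ _ _ H1 H2 H3 H4 H5 H6) as P.
 eapply dconv; [exact P|].
 unfold DPB. cbv beta. rewrite !upd_at. unfold Sq, Eq. rewrite !upd_at. reflexivity.
Qed.


Definition Jterm z c d e :=
  let j := idx d in let k := idx e in
  let x1 := z (CA j) in let x2 := z (CB j) in let x3 := z (CA k) in let x4 := z (CB k) in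
  let S := Sq z j k in let E := Eq z j k in
  (Pf d e 1 x2 x3 x4 S E - Pf d e 0 x2 x3 x4 S E) * PB z c (CA j)
+ (Pf d e x1 1 x3 x4 S E - Pf d e x1 0 x3 x4 S E) * PB z c (CB j)
+ (Pf d e x1 x2 1 x4 S E - Pf d e x1 x2 0 x4 S E) * PB z c (CA k)
+ (Pf d e x1 x2 x3 1 S E - Pf d e x1 x2 x3 0 S E) * PB z c (CB k)
+ (- S * E) * (Pf d e x1 x2 x3 x4 S 1 - Pf d e x1 x2 x3 x4 S 0) * (PB z c (CQ j) - PB z c (CQ k)).

Lemma idx_in N d : In d (coords N) -> (idx d < N)%nat.
Proof. intros H; apply in_coords in H; destruct d; auto. Qed.

Lemma sum_DPB N z c d e : In d (coords N) -> In e (coords N) ->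
  sumL (coords N) (fun f => PB z c f * DPB z d e f) = Jterm z c d e.
Proof. intros Hd He. apply idx_in in Hd, He.
 unfold DPB, Jterm, Pfd. cbv zeta.
 set (j := idx d) in *. set (k := idx e) in *.
 set (p1 := Pf d e 1 _ _ _ _ _ - Pf d e 0 _ _ _ _ _).
 set (p2 := Pf d e _ 1 _ _ _ _ - Pf d e _ 0 _ _ _ _).
 set (p3 := Pf d e _ _ 1 _ _ _ - Pf d e _ _ 0 _ _ _).
 set (p4 := Pf d e _ _ _ 1 _ _ - Pf d e _ _ _ 0 _ _).
 set (p5 := Pf d e _ _ _ _ 1 _ - Pf d e _ _ _ _ 0 _).
 set (p6 := Pf d e _ _ _ _ _ 1 - Pf d e _ _ _ _ _ 0).
 set (g := - Sq z j k * Eq z j k * p6).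
 rewrite (sumL_ext _ _ (fun f => dl f (CA j) * (p1 * PB z c f) + (dl f (CB j) * (p2 * PB z c f)
   + (dl f (CA k) * (p3 * PB z c f) + (dl f (CB k) * (p4 * PB z c f)
   + (dl f (CQ j) * (g * PB z c f) + dl f (CQ k) * (- g * PB z c f))))))).
 2:{ intros f _. unfold g. ring. }
 assert (ND := nodup_coords N).
 rewrite !sumL_plus, !sumL_delta; auto; try (apply in_coords; auto).
 unfold g. ring. Qed.

Lemma pbr_jac_term N z c d e : In c (coords N) -> In d (coords N) -> In e (coords N) ->
  (idx d = idx e \/ z (CQ (idx d)) <> z (CQ (idx e))) ->
  pbr N (cf c) (pbr N (cf d) (cf e)) z = Jterm z c d e.
Proof. intros Hc Hd He H. rewrite pbr_cf_l; auto. rewrite <- (sum_DPB N z c d e); auto.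
 apply sumL_ext. intros f _. f_equal. rewrite <- pd_PB; auto. unfold pd.
 apply Derive_ext. intros s. apply pbr_cf_cf; auto. Qed.

Lemma Sq_diag z x : Sq z x x = 0.
Proof. unfold Sq. rewrite Rminus_diag. apply sgn_0. Qed.
Lemma Eq_diag z x : Eq z x x = 1.
Proof. unfold Eq. rewrite Rminus_diag, Rabs_R0, Ropp_0. apply exp_0. Qed.
Lemma Sq_lt z x y : z (CQ x) < z (CQ y) -> Sq z x y = -1.
Proof. intros; unfold Sq; apply sgn_neg; lra. Qed.
Lemma Sq_gt z x y : z (CQ y) < z (CQ x) -> Sq z x y = 1.
Proof. intros; unfold Sq; apply sgn_pos; lra. Qed.
Lemma Eq_lt z x y : z (CQ x) < z (CQ y) -> Eq z x y = exp (z (CQ x)) / exp (z (CQ y)).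
Proof. intros; unfold Eq. rewrite Rabs_left by lra. unfold Rdiv. rewrite <- exp_Ropp, <- exp_plus. f_equal; ring. Qed.
Lemma Eq_gt z x y : z (CQ y) < z (CQ x) -> Eq z x y = exp (z (CQ y)) / exp (z (CQ x)).
Proof. intros; unfold Eq. rewrite Rabs_right by lra. unfold Rdiv. rewrite <- exp_Ropp, <- exp_plus. f_equal; ring. Qed.
Lemma exp_neq0 x : exp x <> 0.
Proof. apply Rgt_not_eq, exp_pos. Qed.


Ltac split_ne := repeat match goal with
 | H : ?a <> ?b |- _ => match type of a with R => destruct (Rdichotomy _ _ H); clear H end
 end.
Ltac rw_lt := repeat match goal with
 | H : ?z (CQ ?x) < ?z (CQ ?y) |- _ =>
   rewrite ?(Sq_lt z x y H), ?(Sq_gt z y x H), ?(Eq_lt z x y H), ?(Eq_gt z y x H); clear H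
 | H : ?z (CQ ?y) > ?z (CQ ?x) |- _ =>
   rewrite ?(Sq_lt z x y H), ?(Sq_gt z y x H), ?(Eq_lt z x y H), ?(Eq_gt z y x H); clear H
 end.

Lemma jac_alg z c d e :
  (idx c = idx d \/ z (CQ (idx c)) <> z (CQ (idx d))) ->
  (idx d = idx e \/ z (CQ (idx d)) <> z (CQ (idx e))) ->
  (idx c = idx e \/ z (CQ (idx c)) <> z (CQ (idx e))) ->
  Jterm z c d e + Jterm z d e c + Jterm z e c d = 0.
Proof.
 destruct c as [i|i|i], d as [j|j|j], e as [k|k|k]; simpl idx; intros H1 H2 H3; unfold Jterm; simpl;
 destruct H1 as [<-|H1]; destruct H2 as [<-|H2]; destruct H3 as [H3|H3]; try subst;
 split_ne; try (exfalso; lra); rw_lt; rewrite ?Sq_diag, ?Eq_diag;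
 field; repeat split; apply exp_neq0.
Qed.


Lemma pd_cas j z c : z (CB j) <> 0 -> pd (casimir j) c z =
  dl c (CA j) * / (z (CB j) ^ 2) + dl c (CB j) * (- 2 * z (CA j) / z (CB j) ^ 3).
Proof. intros Hb. unfold pd, casimir, dl. apply is_derive_unique. unfold upd.
 repeat destruct coord_eq_dec; try congruence; subst.
 all: auto_derive; [repeat split; auto; intro H; apply Hb; nra | field; auto].
Qed.

Lemma part4 N : forall (j : nat), (j < N)%nat ->
     forall (z : phase), z (CB j) <> 0 ->
     forall (F : phase -> R), (forall c, In c (coords N) -> has_pd F c z) ->
       pbr N (casimir j) F z = 0.
Proof. intros j Hj z Hb F _. unfold pbr.
 set (Y := fun c => sumL (coords N) (fun d => PB z c d * pd F d z)).
 rewrite (sumL_ext _ _ (fun c => dl c (CA j) * (/ (z (CB j) ^ 2) * Y c)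
    + dl c (CB j) * ((- 2 * z (CA j) / z (CB j) ^ 3) * Y c))).
 2:{ intros c _. rewrite pd_cas; auto. unfold Y. rewrite <- !sumL_scal, <- sumL_plus.
     apply sumL_ext; intros; ring. }
 rewrite sumL_plus, !sumL_delta; try apply nodup_coords; try (apply in_coords; auto).
 unfold Y. rewrite <- !sumL_scal, <- sumL_plus. apply sumL_zero. intros d _.
 destruct d as [k|k|k]; simpl; try rewrite (Sq_anti z j k); try rewrite (Eq_sym z j k); field; auto.
Qed.


Lemma iconv (f : R -> R) (a b l l' : R) : is_RInt f a b l -> l = l' -> is_RInt f a b l'.
Proof. intros H ->; exact H. Qed.

Lemma vanish_right (g : R -> R) M : continuous g M -> (forall x, M < x -> g x = 0) -> g M = 0.
Proof. intros Hc Hz. apply continuity_pt_filterlim in Hc.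
 destruct (Req_dec (g M) 0) as [|Hn]; auto. exfalso.
 destruct (Hc (Rabs (g M))) as [alp [Ha Hb]]. apply Rabs_pos_lt; auto.
 specialize (Hb (M + alp / 2)). simpl in Hb. unfold R_dist in Hb.
 rewrite Hz in Hb by lra. rewrite Rminus_0_l, Rabs_Ropp in Hb.
 assert (Rabs (M + alp / 2 - M) < alp). { replace (M + alp/2 - M) with (alp/2) by ring. rewrite Rabs_pos_eq; lra. }
 assert (Rabs (g M) < Rabs (g M)) by (apply Hb; split; [unfold D_x, no_cond; split; auto; lra | auto]). lra. Qed.

Lemma vanish_left (g : R -> R) M : continuous g M -> (forall x, x < M -> g x = 0) -> g M = 0.
Proof. intros Hc Hz. apply continuity_pt_filterlim in Hc.
 destruct (Req_dec (g M) 0) as [|Hn]; auto. exfalso.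
 destruct (Hc (Rabs (g M))) as [alp [Ha Hb]]. apply Rabs_pos_lt; auto.
 specialize (Hb (M - alp / 2)). simpl in Hb. unfold R_dist in Hb.
 rewrite Hz in Hb by lra. rewrite Rminus_0_l, Rabs_Ropp in Hb.
 assert (Rabs (M - alp / 2 - M) < alp). { replace (M - alp/2 - M) with (-(alp/2)) by ring. rewrite Rabs_Ropp, Rabs_pos_eq; lra. }
 assert (Rabs (g M) < Rabs (g M)) by (apply Hb; split; [unfold D_x, no_cond; split; auto; lra | auto]). lra. Qed.

Definition D1 (phi : R -> R) := Derive phi.
Definition D2 (phi : R -> R) := Derive_n phi 2.

Lemma dphi (phi : R -> R) (Hd : forall k x, ex_derive_n phi k x) x : is_derive phi x (D1 phi x).
Proof. apply Derive_correct. exact (Hd 1%nat x). Qed.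
Lemma dD1 (phi : R -> R) (Hd : forall k x, ex_derive_n phi k x) x : is_derive (D1 phi) x (D2 phi x).
Proof. unfold D2. simpl. apply Derive_correct. exact (Hd 2%nat x). Qed.
Lemma cD2 (phi : R -> R) (Hd : forall k x, ex_derive_n phi k x) x : continuous (D2 phi) x.
Proof. apply (ex_derive_continuous (D2 phi)). exact (Hd 3%nat x). Qed.
Lemma D2_ex (phi : R -> R) (Hd : forall k x, ex_derive_n phi k x) x : ex_derive (D2 phi) x.
Proof. exact (Hd 3%nat x). Qed.

Lemma loc_zero (phi : R -> R) (Hd : forall k x, ex_derive_n phi k x) (M : R) (Hz : forall x, M < Rabs x -> phi x = 0) x : M < Rabs x -> locally x (fun t => 0 = phi t).
Proof. intros H. assert (Hp : 0 < Rabs x - M) by lra. exists (mkposreal _ Hp).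
 intros y Hy. change (Rabs (y - x) < Rabs x - M) in Hy. symmetry. apply Hz.
 assert (Rabs x <= Rabs y + Rabs (x - y)).
 { replace x with (y + (x - y)) at 1 by ring. apply Rabs_triang. }
 rewrite Rabs_minus_sym in Hy. lra. Qed.

Lemma D1_zero (phi : R -> R) (Hd : forall k x, ex_derive_n phi k x) (M : R) (Hz : forall x, M < Rabs x -> phi x = 0) x : M < Rabs x -> D1 phi x = 0.
Proof. intros H. apply (is_derive_unique phi x 0). eapply is_derive_ext_loc. apply (loc_zero phi Hd M Hz); auto. apply d_const. Qed.

Lemma phi_M (phi : R -> R) (Hd : forall k x, ex_derive_n phi k x) (M : R) (Hz : forall x, M < Rabs x -> phi x = 0) : 0 <= M -> phi M = 0 /\ D1 phi M = 0 /\ phi (- M) = 0 /\ D1 phi (- M) = 0.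
Proof. intros HM. repeat split.
 - apply vanish_right. apply (ex_derive_continuous phi); exact (Hd 1%nat M). intros; apply Hz; rewrite Rabs_pos_eq; lra.
 - apply vanish_right. apply (ex_derive_continuous (D1 phi)); exact (Hd 2%nat M). intros; apply (D1_zero phi Hd M Hz); rewrite Rabs_pos_eq; lra.
 - apply vanish_left. apply (ex_derive_continuous phi); exact (Hd 1%nat (-M)). intros; apply Hz; rewrite Rabs_left; lra.
 - apply vanish_left. apply (ex_derive_continuous (D1 phi)); exact (Hd 2%nat (-M)). intros; apply (D1_zero phi Hd M Hz); rewrite Rabs_left; lra.
Qed.

Lemma peak_int (M : R) (phi : R -> R) (Hd : forall k x, ex_derive_n phi k x) (Hz : forall x, M < Rabs x -> phi x = 0) q : is_RInt (fun x => exp (- Rabs (x - q)) * (phi x - Derive_n phi 2 x)) (- M) M (2 * phi q).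
Proof.
 destruct (Rlt_or_le M 0) as [HM|HM].
 -
   assert (Z : forall x, phi x = 0) by (intros; apply Hz; pose proof (Rabs_pos x); lra).
   assert (Z2 : forall x, Derive_n phi 2 x = 0).
   { intros. rewrite (Derive_n_ext phi (fun _ => 0)); auto. apply Derive_n_const. }
   rewrite Z. eapply iconv. eapply is_RInt_ext. 2: apply (is_RInt_const (-M) M 0).
   intros x _. cbv beta. rewrite Z, Z2, Rminus_diag, Rmult_0_r. reflexivity. change (scal (M - - M) 0) with ((M - - M) * 0). rewrite !Rmult_0_r. reflexivity.
 - destruct (phi_M phi Hd M Hz HM) as [P1 [P2 [P3 P4]]].
   set (q' := Rmax (- M) (Rmin q M)).
   assert (Hq' : - M <= q' <= M) by (unfold q', Rmax, Rmin; repeat destruct Rle_dec; lra).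
   set (G := fun x => exp (x - q) * (phi x - D1 phi x)).
   set (F := fun x => - (exp (q - x) * (D1 phi x + phi x))).
   assert (I1 : is_RInt (fun x => exp (- Rabs (x - q)) * (phi x - Derive_n phi 2 x)) (- M) q' (G q' - G (- M))).
   { eapply is_RInt_ext. 2: apply (is_RInt_derive G (fun x => exp (x - q) * (phi x - D2 phi x))).
     + intros x Hx. rewrite Rmin_left, Rmax_right in Hx by lra.
       assert (x < q) by (unfold q', Rmax, Rmin in *; repeat destruct Rle_dec; lra).
       rewrite Rabs_left by lra. f_equal. f_equal. ring.
     + intros x _. eapply dconv. apply d_mult. apply d_exp. apply d_minus. apply d_id. apply d_const.
       apply d_minus. apply (dphi phi Hd). apply (dD1 phi Hd). unfold G. ring.
     + intros x _. apply (ex_derive_continuous (fun x => exp (x - q) * (phi x - D2 phi x))). eexists. apply d_mult. apply d_exp. apply d_minus. apply d_id. apply d_const.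
       apply d_minus. apply (dphi phi Hd). apply Derive_correct, (D2_ex phi Hd). }
   assert (I2 : is_RInt (fun x => exp (- Rabs (x - q)) * (phi x - Derive_n phi 2 x)) q' M (F M - F q')).
   { eapply is_RInt_ext. 2: apply (is_RInt_derive F (fun x => exp (q - x) * (phi x - D2 phi x))).
     + intros x Hx. rewrite Rmin_left, Rmax_right in Hx by lra.
       assert (q < x) by (unfold q', Rmax, Rmin in *; repeat destruct Rle_dec; lra).
       rewrite Rabs_right by lra. f_equal. f_equal. ring.
     + intros x _. eapply dconv. apply d_opp. apply d_mult. apply d_exp. apply d_minus. apply d_const. apply d_id.
       apply d_plus. apply (dD1 phi Hd). apply (dphi phi Hd). unfold F. ring.
     + intros x _. apply (ex_derive_continuous (fun x => exp (q - x) * (phi x - D2 phi x))). eexists. apply d_mult. apply d_exp. apply d_minus. apply d_const. apply d_id.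
       apply d_minus. apply (dphi phi Hd). apply Derive_correct, (D2_ex phi Hd). }
   assert (I := is_RInt_Chasles _ _ _ _ _ _ I1 I2).
   change (plus (G q' - G (- M)) (F M - F q')) with ((G q' - G (- M)) + (F M - F q')) in I.
   eapply iconv. exact I. unfold G, F. fold (D1 phi) in P2, P4. rewrite P2, P4, P1, P3.
   unfold q', Rmax, Rmin; repeat destruct Rle_dec.
   all: rewrite ?P1, ?P2, ?P3, ?P4.
   1: rewrite Rminus_diag, exp_0; ring.
   all: assert (PQ : phi q = 0) by
     (destruct (Req_dec q M) as [->|]; [auto|]; destruct (Req_dec q (-M)) as [->|]; [auto|];
      apply Hz; unfold Rabs; destruct Rcase_abs; lra).
   all: rewrite PQ; ring.
Qed.


Lemma peak_int_sum N (c q : nat -> R -> R) t M phi :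
  (forall k x, ex_derive_n phi k x) -> (forall x, M < Rabs x -> phi x = 0) ->
  is_RInt (fun x => peak N c q t x * (phi x - Derive_n phi 2 x)) (- M) M (dpair N c q t phi).
Proof. intros Hd Hz. induction N.
 - eapply iconv. eapply is_RInt_ext. 2: apply (is_RInt_const (-M) M 0).
   intros x _. unfold peak; simpl. rewrite Rmult_0_l. reflexivity.
   change (scal (M - - M) 0) with ((M - - M) * 0). unfold dpair; simpl. ring.
 - assert (I := is_RInt_plus _ _ _ _ _ _ IHN (is_RInt_scal _ _ _ (c N t) _ (peak_int M phi Hd Hz (q N t)))).
   eapply iconv. eapply is_RInt_ext. 2: exact I.
   intros x _. unfold peak; simpl. change (scal ?a ?b) with (a * b). change (plus ?a ?b) with (a + b). ring.
   change (scal ?a ?b) with (a * b). change (plus ?a ?b) with (a + b). unfold dpair; simpl. ring.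
Qed.

Lemma peak_deriv N (c q : nat -> R -> R) t x : (forall j, (j < N)%nat -> x <> q j t) ->
  is_derive (peak N c q t) x (peak_x N c q t x).
Proof. intros H. unfold peak, peak_x.
 apply (d_sumN N (fun j x => c j t * exp (- Rabs (x - q j t)))). intros j Hj.
 eapply dconv. apply (is_derive_scal (fun x => exp (- Rabs (x - q j t)))).
 apply d_exp. apply d_opp. apply d_Rabs. apply d_minus. apply d_id. apply d_const.
 specialize (H j Hj). lra. cbv beta. ring. Qed.

Lemma w_at N a b q t j :
  2 * peak N a q t (q j t) + peak N b q t (q j t) = rhs_q N (pt a b q t) j.
Proof. unfold peak, rhs_q, Eq. simpl. rewrite <- sumN_scal, <- sumN_plus. apply sumN_ext; intros; ring. Qed.

Definition Ssum N z j := sumN N (fun k => (2 * z (CA k) + z (CB k)) * Sq z j k * Eq z j k).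

Lemma wx_at N a b q t j :
  2 * peak_x N a q t (q j t) + peak_x N b q t (q j t) = - Ssum N (pt a b q t) j.
Proof. unfold peak_x, Ssum, Sq, Eq. simpl. rewrite <- sumN_scal, <- sumN_plus, <- sumN_opp. apply sumN_ext; intros; ring. Qed.

Lemma d_dpair N (c q : nat -> R -> R) t phi dc dq :
  (forall k x, ex_derive_n phi k x) ->
  (forall j, (j < N)%nat -> is_derive (c j) t (dc j) /\ is_derive (q j) t (dq j)) ->
  is_derive (fun s => dpair N c q s phi) t
    (sumN N (fun j => 2 * dc j * phi (q j t) + 2 * c j t * (dq j * Derive phi (q j t)))).
Proof. intros Hd H. unfold dpair.
 apply (d_sumN N (fun j s => 2 * c j s * phi (q j s))). intros j Hj. destruct (H j Hj) as [H1 H2].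
 eapply dconv. apply d_mult. apply d_mult. apply d_const. exact H1.
 apply (is_derive_comp phi (q j)). apply Derive_correct. exact (Hd 1%nat (q j t)). exact H2.
 change (scal ?a ?b) with (a * b). cbv beta. ring. Qed.

Lemma sumN_ms n c f g : sumN n f - c * sumN n g = sumN n (fun j => f j - c * g j).
Proof. induction n; simpl; [ring| rewrite <- IHn; ring]. Qed.

Lemma part1 N : forall (a b q : nat -> R -> R) (t : R),
     (forall j, (j < N)%nat ->
        is_derive (a j) t (rhs_a N (pt a b q t) j) /\
        is_derive (b j) t (rhs_b N (pt a b q t) j) /\
        is_derive (q j) t (rhs_q N (pt a b q t) j)) ->
     let u := peak N a q in
     let v := peak N b q in
     let w := fun t x => 2 * u t x + v t x in
     let wx := fun t x => 2 * peak_x N a q t x + peak_x N b q t x in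
     (forall x, (forall j, (j < N)%nat -> x <> q j t) ->
        is_derive (u t) x (peak_x N a q t x) /\
        is_derive (v t) x (peak_x N b q t x)) /\
     (forall (M : R) (phi : R -> R), test_fun M phi ->
        RInt (fun x => u t x * (phi x - Derive_n phi 2 x)) (- M) M
          = dpair N a q t phi /\
        RInt (fun x => v t x * (phi x - Derive_n phi 2 x)) (- M) M
          = dpair N b q t phi /\
        is_derive (fun s => dpair N a q s phi) t
          (dpair N a q t (fun x => w t x * Derive phi x)
           - 2 * dpair N a q t (fun x => wx t x * phi x)) /\
        is_derive (fun s => dpair N b q s phi) t
          (dpair N b q t (fun x => w t x * Derive phi x)
           - dpair N b q t (fun x => wx t x * phi x))).
Proof. intros a b q t H. cbv zeta. split.
 - intros x Hx. split; apply peak_deriv; auto.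
 - intros M phi [Hd Hz]. split; [|split; [|split]].
   + apply is_RInt_unique. apply peak_int_sum; auto.
   + apply is_RInt_unique. apply peak_int_sum; auto.
   + eapply dconv. apply d_dpair; auto. intros j Hj; destruct (H j Hj) as [? [? ?]]; split; eauto.
     unfold dpair. rewrite (sumN_ms N 2). apply sumN_ext. intros j Hj.
     rewrite w_at, wx_at.
     unfold rhs_a. fold (Ssum N (pt a b q t) j). simpl. ring.
   + eapply dconv. apply d_dpair; auto. intros j Hj; destruct (H j Hj) as [? [? ?]]; split; eauto.
     unfold dpair. rewrite <- (Rmult_1_l (sumN N (fun j => 2 * b j t * ((2 * peak_x N a q t (q j t) + peak_x N b q t (q j t)) * phi (q j t))))), (sumN_ms N 1). apply sumN_ext. intros j Hj.
     rewrite w_at, wx_at.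
     unfold rhs_b. fold (Ssum N (pt a b q t) j). simpl. ring.
Qed.


Lemma part3 N : forall (z : phase),
     (forall j k, (j < N)%nat -> (k < N)%nat -> j <> k -> z (CQ j) <> z (CQ k)) ->
     forall c d e, In c (coords N) -> In d (coords N) -> In e (coords N) ->
       pbr N (cf c) (pbr N (cf d) (cf e)) z
       + pbr N (cf d) (pbr N (cf e) (cf c)) z
       + pbr N (cf e) (pbr N (cf c) (cf d)) z = 0.
Proof. intros z Hz c d e Hc Hd He.
 assert (ND: forall x y, In x (coords N) -> In y (coords N) -> idx x = idx y \/ z (CQ (idx x)) <> z (CQ (idx y))).
 { intros x y Hx Hy. destruct (PeanoNat.Nat.eq_dec (idx x) (idx y)); [left|right]; auto. apply Hz; auto using idx_in. }
 rewrite (pbr_jac_term N z c d e), (pbr_jac_term N z d e c), (pbr_jac_term N z e c d); auto.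
 apply jac_alg; auto.
Qed.

Theorem theorem1 (N : nat) (HN : (1 <= N)%nat) :
  (* (1) N-peakon solutions: if a, b, q satisfy the peakon ODEs at time t,
     then u, v given by the peakon ansatz satisfy the Popowicz system at
     time t in the weak (distributional) sense, with m = u - u_xx and
     n = v - v_xx the measures 2 sum a_j delta_{q_j}, 2 sum b_j delta_{q_j} *)
  (forall (a b q : nat -> R -> R) (t : R),
     (forall j, (j < N)%nat ->
        is_derive (a j) t (rhs_a N (pt a b q t) j) /\
        is_derive (b j) t (rhs_b N (pt a b q t) j) /\
        is_derive (q j) t (rhs_q N (pt a b q t) j)) ->
     let u := peak N a q in
     let v := peak N b q in
     let w := fun t x => 2 * u t x + v t x in
     let wx := fun t x => 2 * peak_x N a q t x + peak_x N b q t x in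
     (* peak_x is the x-derivative of the peakon away from the peaks *)
     (forall x, (forall j, (j < N)%nat -> x <> q j t) ->
        is_derive (u t) x (peak_x N a q t x) /\
        is_derive (v t) x (peak_x N b q t x)) /\
     (forall (M : R) (phi : R -> R), test_fun M phi ->
        (* m = u - u_xx and n = v - v_xx in the sense of distributions *)
        RInt (fun x => u t x * (phi x - Derive_n phi 2 x)) (- M) M
          = dpair N a q t phi /\
        RInt (fun x => v t x * (phi x - Derive_n phi 2 x)) (- M) M
          = dpair N b q t phi /\
        (* m_t + m_x w + 3 m w_x = m_t + (m w)_x + 2 m w_x = 0, weakly *)
        is_derive (fun s => dpair N a q s phi) t
          (dpair N a q t (fun x => w t x * Derive phi x)
           - 2 * dpair N a q t (fun x => wx t x * phi x)) /\
        (* n_t + n_x w + 2 n w_x = n_t + (n w)_x + n w_x = 0, weakly *)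
        is_derive (fun s => dpair N b q s phi) t
          (dpair N b q t (fun x => w t x * Derive phi x)
           - dpair N b q t (fun x => wx t x * phi x)))) /\
  (* (2) the peakon ODEs are Hamilton's equations for h = 2 sum (a_j + b_j) *)
  (forall (z : phase) (j : nat), (j < N)%nat ->
     pbr N (cf (CA j)) (ham N) z = rhs_a N z j /\
     pbr N (cf (CB j)) (ham N) z = rhs_b N z j /\
     pbr N (cf (CQ j)) (ham N) z = rhs_q N z j) /\
  (* (3) the bracket is a Poisson bracket: Jacobi identity on the coordinate
     functions, on the open set where the positions q_j are pairwise distinct
     (elsewhere the structure functions are not differentiable) *)
  (forall (z : phase),
     (forall j k, (j < N)%nat -> (k < N)%nat -> j <> k -> z (CQ j) <> z (CQ k)) ->
     forall c d e, In c (coords N) -> In d (coords N) -> In e (coords N) ->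
       pbr N (cf c) (pbr N (cf d) (cf e)) z
       + pbr N (cf d) (pbr N (cf e) (cf c)) z
       + pbr N (cf e) (pbr N (cf c) (cf d)) z = 0) /\
  (* (4) the C_j = a_j / b_j^2 are Casimirs *)
  (forall (j : nat), (j < N)%nat ->
     forall (z : phase), z (CB j) <> 0 ->
     forall (F : phase -> R), (forall c, In c (coords N) -> has_pd F c z) ->
       pbr N (casimir j) F z = 0).
Proof.
 split; [exact (part1 N)|]. split; [exact (part2 N)|]. split; [exact (part3 N)|]. exact (part4 N).
Qed.
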